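(* (Multiparty cut-elimination in MRL.) Let $n\ge1$ and let $R_1,\ldots,R_n\subseteq\mathcal{R}$ be such that the complements $\overline{R_1},\ldots,\overline{R_n}$ are pairwise disjoint and $\overline{R_1}\cup\cdots\cup\overline{R_n}=\mathcal{R}$. For all sequents $\Gamma_1,\ldots,\Gamma_n$ and every formula $A$ of MRL: if $\Gamma_i, R_i{:}A$ is derivable in MRL for each $1\le i\le n$, then $\Gamma_1,\ldots,\Gamma_n$ is derivable in MRL.
   Context: Fix a nonempty set $\mathcal{R}$ (the set of roles). For $R\subseteq\mathcal{R}$ write $\overline{R}=\mathcal{R}\setminus R$. An ultrafilter $\mathcal{U}$ on $\mathcal{R}$ is a set of subsets of $\mathcal{R}$ such that $\mathcal{R}\in\mathcal{U}$; $R_1\in\mathcal{U}$ and $R_1\subseteq R_2$ imply $R_2\in\mathcal{U}$; $R_1,R_2\in\mathcal{U}$ imply $R_1\cap R_2\in\mathcal{U}$; and for every $R\subseteq\mathcal{R}$, $R\in\mathcal{U}$ or $\overline{R}\in\mathcal{U}$. An endomorphism is any function $f:\mathcal{R}\to\mathcal{R}$, and $f^{-1}(R)$ denotes the preimage of $R$. Fix a first-order language of terms $t$ with variables $x$, and a collection of primitive (atomic) formulas $a$ (which may contain terms). Formulas of MRL: $A ::= a \mid \neg_f(A) \mid A_1\wedge_{\mathcal{U}} A_2 \mid A\supset_{f,\mathcal{U}} B \mid \forall_{\mathcal{U}}(\lambda x.A)$, with $f$ an endomorphism and $\mathcal{U}$ an ultrafilter on $\mathcal{R}$; $x$ is bound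 in $\forall_{\mathcal{U}}(\lambda x.A)$, and $A[t/x]$ is capture-avoiding substitution. An i-formula is a pair $R{:}A$ with $R\subseteq\mathcal{R}$ and $A$ a formula; a sequent is a finite multiset of i-formulas, and comma denotes multiset union. Derivability in MRL is given by the rules (premises $\Rightarrow$ conclusion, $\Gamma,\Gamma_1,\Gamma_2$ arbitrary sequents): (Id) $\Gamma, R_1{:}a,\ldots,R_n{:}a$ is derivable whenever $n\ge1$ and $R_1,\ldots,R_n$ are pairwise disjoint with union $\mathcal{R}$; (Weaken) $\Gamma,R{:}A,R{:}A \Rightarrow \Gamma,R{:}A$; ($\neg$) $\Gamma, f^{-1}(R){:}A \Rightarrow \Gamma, R{:}\neg_f(A)$; ($\wedge$-neg-l) if $R\notin\mathcal{U}$: $\Gamma,R{:}A\Rightarrow\Gamma,R{:}A\wedge_{\mathcal{U}}B$; ($\wedge$-neg-r) if $R\notin\mathcal{U}$: $\Gamma,R{:}B\Rightarrow\Gamma,R{:}A\wedge_{\mathcal{U}}B$; ($\wedge$-pos) if $R\in\mathcal{U}$: $(\Gamma,R{:}A;\ \Gamma,R{:}B)\Rightarrow\Gamma,R{:}A\wedge_{\mathcal{U}}B$; ($\supset$-neg) if $R\notin\mathcal{U}$: $\Gamma,f^{-1}(R){:}A,R{:}B\Rightarrow\Gamma,R{:}A\supset_{f,\mathcal{U}}B$; ($\supset$-pos) if $R\in\mathcal{U}$: $(\Gamma_1,f^{-1}(R){:}A;\ \Gamma_2,R{:}B)\Rightarrow\Gamma_1,\Gamma_2,R{:}A\supset_{f,\mathcal{U}}B$;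 ($\forall$-neg) if $R\notin\mathcal{U}$ and $t$ is a term: $\Gamma,R{:}A[t/x]\Rightarrow\Gamma,R{:}\forall_{\mathcal{U}}(\lambda x.A)$; ($\forall$-pos) if $R\in\mathcal{U}$ and $x$ has no free occurrence in $\Gamma$: $\Gamma,R{:}A\Rightarrow\Gamma,R{:}\forall_{\mathcal{U}}(\lambda x.A)$. A sequent is derivable in MRL if it is the conclusion of a finite derivation tree built from these rules. *)

(* Defs.v *)
From Stdlib Require Import List Arith Permutation.
Import ListNotations.

Section MRL.

Variable Role : Type.
Variable fsym : Type.
Variable psym : Type.

Definition rset := Role -> Prop.
Definition rsubset (R1 R2 : rset) : Prop := forall r, R1 r -> R2 r.
Definition rinter (R1 R2 : rset) : rset := fun r => R1 r /\ R2 r.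
Definition rcompl (R : rset) : rset := fun r => ~ R r.
Definition rfull : rset := fun _ => True.
Definition preim (f : Role -> Role) (R : rset) : rset := fun r => R (f r).

Definition is_ultrafilter (U : rset -> Prop) : Prop :=
  U rfull /\
  (forall R1 R2, U R1 -> rsubset R1 R2 -> U R2) /\
  (forall R1 R2, U R1 -> U R2 -> U (rinter R1 R2)) /\
  (forall R, U R \/ U (rcompl R)).

Record ultrafilter := mkUltrafilter {
  uf_mem : rset -> Prop;
  uf_prop : is_ultrafilter uf_mem }.

(* First-order terms, locally nameless: free variables [tfvar x] and
   bound variables [tbvar i] (de Bruijn indices). *)
Inductive term : Type :=
| tfvar : nat -> term
| tbvar : nat -> term
| tapp : fsym -> list term -> term.

Inductive atom : Type :=
| mkatom : psym -> list term -> atom.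

(* Formulas of MRL.  In [fall U A] the body [A] binds the index 0. *)
Inductive formula : Type :=
| fatom : atom -> formula
| fneg : (Role -> Role) -> formula -> formula
| fand : ultrafilter -> formula -> formula -> formula
| fimp : (Role -> Role) -> ultrafilter -> formula -> formula -> formula
| fall : ultrafilter -> formula -> formula.

Fixpoint open_term (k : nat) (u : term) (t : term) : term :=
  match t with
  | tfvar x => tfvar x
  | tbvar i => if Nat.eqb i k then u else tbvar i
  | tapp f ts => tapp f (map (open_term k u) ts)
  end.

Definition open_atom (k : nat) (u : term) (a : atom) : atom :=
  match a with mkatom p ts => mkatom p (map (open_term k u) ts) end.

Fixpoint open_form (k : nat) (u : term) (A : formula) : formula :=
  match A with
  | fatom a => fatom (open_atom k u a)
  | fneg f B => fneg f (open_form k u B)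
  | fand U B C => fand U (open_form k u B) (open_form k u C)
  | fimp f U B C => fimp f U (open_form k u B) (open_form k u C)
  | fall U B => fall U (open_form (S k) u B)
  end.

(* [A[t/x]] for the body of a quantifier. *)
Definition instantiate (A : formula) (t : term) : formula := open_form 0 t A.

Fixpoint lc_term_at (k : nat) (t : term) : Prop :=
  match t with
  | tfvar _ => True
  | tbvar i => i < k
  | tapp _ ts => (fix all_lc (l : list term) : Prop :=
                    match l with
                    | [] => True
                    | t' :: l' => lc_term_at k t' /\ all_lc l'
                    end) ts
  end.

Definition lc_atom_at (k : nat) (a : atom) : Prop :=
  match a with mkatom _ ts => Forall (lc_term_at k) ts end.

Fixpoint lc_form_at (k : nat) (A : formula) : Prop :=
  match A with
  | fatom a => lc_atom_at k a
  | fneg _ B => lc_form_at k B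
  | fand _ B C => lc_form_at k B /\ lc_form_at k C
  | fimp _ _ B C => lc_form_at k B /\ lc_form_at k C
  | fall _ B => lc_form_at (S k) B
  end.

Definition is_term (t : term) : Prop := lc_term_at 0 t.
Definition is_formula (A : formula) : Prop := lc_form_at 0 A.

Fixpoint occurs_term (x : nat) (t : term) : Prop :=
  match t with
  | tfvar y => y = x
  | tbvar _ => False
  | tapp _ ts => (fix ex_occ (l : list term) : Prop :=
                    match l with
                    | [] => False
                    | t' :: l' => occurs_term x t' \/ ex_occ l'
                    end) ts
  end.

Definition occurs_atom (x : nat) (a : atom) : Prop :=
  match a with mkatom _ ts => Exists (occurs_term x) ts end.

Fixpoint occurs_form (x : nat) (A : formula) : Prop :=
  match A with
  | fatom a => occurs_atom x a
  | fneg _ B => occurs_form x B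
  | fand _ B C => occurs_form x B \/ occurs_form x C
  | fimp _ _ B C => occurs_form x B \/ occurs_form x C
  | fall _ B => occurs_form x B
  end.

(* i-formulas and sequents (finite multisets, represented as lists
   modulo permutation: see rule [d_exch]). *)
Definition iformula := (rset * formula)%type.
Definition sequent := list iformula.

Definition occurs_seq (x : nat) (G : sequent) : Prop :=
  exists p, In p G /\ occurs_form x (snd p).

Definition is_partition (Rs : list rset) : Prop :=
  (forall i j r, i < length Rs -> j < length Rs -> i <> j ->
     nth i Rs rfull r -> nth j Rs rfull r -> False) /\
  (forall r, exists R, In R Rs /\ R r).

Inductive derivable : sequent -> Prop :=
| d_exch : forall G D, Permutation G D -> derivable G -> derivable D
| d_id : forall G (Rs : list rset) (a : atom),
    Rs <> [] -> is_partition Rs ->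
    derivable (map (fun R => (R, fatom a)) Rs ++ G)
| d_weaken : forall G R A,
    derivable ((R, A) :: (R, A) :: G) -> derivable ((R, A) :: G)
| d_neg : forall G R f A,
    derivable ((preim f R, A) :: G) -> derivable ((R, fneg f A) :: G)
| d_and_neg_l : forall G R U A B, ~ uf_mem U R ->
    derivable ((R, A) :: G) -> derivable ((R, fand U A B) :: G)
| d_and_neg_r : forall G R U A B, ~ uf_mem U R ->
    derivable ((R, B) :: G) -> derivable ((R, fand U A B) :: G)
| d_and_pos : forall G R U A B, uf_mem U R ->
    derivable ((R, A) :: G) -> derivable ((R, B) :: G) ->
    derivable ((R, fand U A B) :: G)
| d_imp_neg : forall G R f U A B, ~ uf_mem U R ->
    derivable ((preim f R, A) :: (R, B) :: G) ->
    derivable ((R, fimp f U A B) :: G)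
| d_imp_pos : forall G1 G2 R f U A B, uf_mem U R ->
    derivable ((preim f R, A) :: G1) -> derivable ((R, B) :: G2) ->
    derivable ((R, fimp f U A B) :: G1 ++ G2)
| d_all_neg : forall G R U A t, ~ uf_mem U R -> is_term t ->
    derivable ((R, instantiate A t) :: G) ->
    derivable ((R, fall U A) :: G)
| d_all_pos : forall G R U A x, uf_mem U R ->
    ~ occurs_seq x G -> ~ occurs_form x A ->
    derivable ((R, instantiate A (tfvar x)) :: G) ->
    derivable ((R, fall U A) :: G).

End MRL.

Arguments derivable {Role fsym psym}.
Arguments is_formula {Role fsym psym}.
Arguments rcompl {Role}.
Arguments rfull {Role}.

(* Main.v *)
Require Import Defs.
From Stdlib Require Import List Arith Permutation Lia Classical.
Import ListNotations.


Section PS.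
Context {T : Type}.
Lemma pf_skip_cons (x c : T) L E : Permutation L (x :: E) -> Permutation (c :: L) (x :: c :: E).
Proof. intros H. rewrite H. apply perm_swap. Qed.
Lemma pf_skip_app (x : T) B L E : Permutation L (x :: E) -> Permutation (B ++ L) (x :: B ++ E).
Proof. intros H. rewrite H. symmetry. apply Permutation_middle. Qed.
Lemma pf_blast (B : list T) : Permutation B (B ++ []).
Proof. rewrite app_nil_r. reflexivity. Qed.
Lemma pf_bskip_cons (c : T) B L E : Permutation L (B ++ E) -> Permutation (c :: L) (B ++ c :: E).
Proof. intros H. rewrite H. apply Permutation_middle. Qed.
Lemma pf_bskip_app (C B L E : list T) : Permutation L (B ++ E) -> Permutation (C ++ L) (B ++ C ++ E).
Proof. intros H. rewrite H. rewrite !app_assoc. apply Permutation_app_tail. apply Permutation_app_comm. Qed.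
Lemma ps_cons (x : T) L R R' : Permutation R (x :: R') -> Permutation L R' -> Permutation (x :: L) R.
Proof. intros H1 H2. rewrite H1, H2. reflexivity. Qed.
Lemma ps_app (B L R R' : list T) : Permutation R (B ++ R') -> Permutation L R' -> Permutation (B ++ L) R.
Proof. intros H1 H2. rewrite H1, H2. reflexivity. Qed.
Lemma ps_last (B R R' : list T) : Permutation R (B ++ R') -> Permutation [] R' -> Permutation B R.
Proof. intros H1 H2. rewrite H1. apply Permutation_nil in H2. subst. rewrite app_nil_r. reflexivity. Qed.
End PS.

Ltac pfront :=
  first [ apply Permutation_refl
        | apply pf_blast
        | eapply pf_skip_cons; pfront
        | eapply pf_skip_app; pfront
        | eapply pf_bskip_cons; pfront
        | eapply pf_bskip_app; pfront ].

Ltac psolve_core :=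
  first [ apply Permutation_refl
        | eapply ps_cons; [pfront | psolve_core]
        | eapply ps_app; [pfront | psolve_core]
        | eapply ps_last; [pfront | apply Permutation_refl] ].

Ltac pnorm := repeat (rewrite <- ?app_assoc, <- ?app_comm_cons); rewrite ?app_nil_r.
Ltac psolve := pnorm; psolve_core.

Goal forall (T:Type) (a b c : T) (G H K : list T), Permutation (a :: (G ++ b :: H) ++ c :: K) (K ++ c :: b :: H ++ a :: G).
intros. psolve. Qed.
Goal forall (T:Type) (a b c : T) (G H K : list T), Permutation ((a :: G) ++ H) (H ++ [a] ++ G).
intros. psolve. Qed.

Arguments tfvar {fsym}. Arguments tbvar {fsym}. Arguments tapp {fsym}.
Arguments mkatom {fsym psym}.
Arguments fatom {Role fsym psym}. Arguments fneg {Role fsym psym}. Arguments fand {Role fsym psym}.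
Arguments fimp {Role fsym psym}. Arguments fall {Role fsym psym}.
Arguments open_term {fsym}. Arguments open_atom {fsym psym}. Arguments open_form {Role fsym psym}.
Arguments instantiate {Role fsym psym}.
Arguments lc_term_at {fsym}. Arguments is_term {fsym}.
Arguments occurs_term {fsym}. Arguments occurs_atom {fsym psym}. Arguments occurs_form {Role fsym psym}.
Arguments occurs_seq {Role fsym psym}.
Arguments is_partition {Role}. Arguments preim {Role}. Arguments uf_mem {Role}. Arguments uf_prop {Role}.
Arguments rinter {Role}. Arguments rsubset {Role}.

Section Syn.
Context {Role fsym psym : Type}.
Notation term := (term fsym).
Notation formula := (formula Role fsym psym).
Implicit Types (t u : term) (A B : formula) (G : sequent Role fsym psym) (s : nat -> term) (ts : list term).

Fixpoint term_ind' (P : term -> Prop) (Hf : forall x, P (tfvar x)) (Hb : forall i, P (tbvar i))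
  (Ha : forall f ts, Forall P ts -> P (tapp f ts)) (t : term) {struct t} : P t :=
  match t with
  | tfvar x => Hf x
  | tbvar i => Hb i
  | tapp f ts => Ha f ts ((fix go (l : list term) : Forall P l :=
       match l with [] => Forall_nil _ | t' :: l' => Forall_cons _ (term_ind' P Hf Hb Ha t') (go l') end) ts)
  end.

Lemma lc_tapp k (f : fsym) (ts : list term) : lc_term_at k (tapp f ts) <-> Forall (lc_term_at k) ts.
Proof.
  induction ts as [|t ts IH]; simpl. { split; auto. }
  simpl in IH. rewrite Forall_cons_iff. rewrite <- IH. tauto.
Qed.

Lemma occ_tapp x (f : fsym) (ts : list term) : occurs_term x (tapp f ts) <-> Exists (occurs_term x) ts.
Proof.
  induction ts as [|t ts IH]; simpl. { split; [tauto|intros H; inversion H]. }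
  simpl in IH. rewrite Exists_cons. rewrite <- IH. tauto.
Qed.

Fixpoint tsubst (s : nat -> term) (t : term) : term :=
  match t with
  | tfvar x => s x
  | tbvar i => tbvar i
  | tapp f ts => tapp f (map (tsubst s) ts)
  end.

Definition asubst (s : nat -> term) (a : atom fsym psym) : atom fsym psym :=
  match a with mkatom p ts => mkatom p (map (tsubst s) ts) end.

Fixpoint fsubst (s : nat -> term) (A : formula) : formula :=
  match A with
  | fatom a => fatom (asubst s a)
  | fneg f B => fneg f (fsubst s B)
  | fand U B C => fand U (fsubst s B) (fsubst s C)
  | fimp f U B C => fimp f U (fsubst s B) (fsubst s C)
  | fall U B => fall U (fsubst s B)
  end.

Definition ssubst (s : nat -> term) (G : sequent Role fsym psym) : sequent Role fsym psym :=
  map (fun p => (fst p, fsubst s (snd p))) G.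

Definition sc (s : nat -> term) := forall x, lc_term_at 0 (s x).

Lemma map_id_Forall {X} (g : X -> X) l : Forall (fun y => g y = y) l -> map g l = l.
Proof. induction 1; simpl; congruence. Qed.

Lemma map_ext_Forall {X Y} (g h : X -> Y) l : Forall (fun y => g y = h y) l -> map g l = map h l.
Proof. induction 1; simpl; congruence. Qed.

Lemma open_lc0 t : lc_term_at 0 t -> forall k u, open_term k u t = t.
Proof.
  induction t as [x|i|f ts IH] using term_ind'; simpl; intros H k u; auto.
  - lia.
  - f_equal. pose proof (proj1 (lc_tapp _ f ts) H) as H'. apply map_id_Forall.
    clear H. induction IH; inversion H'; subst; constructor; auto.
Qed.

Lemma tsubst_open s (Hs : sc s) t : forall k u,
  tsubst s (open_term k u t) = open_term k (tsubst s u) (tsubst s t).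
Proof.
  induction t as [x|i|f ts IH] using term_ind'; intros k u0; simpl.
  - rewrite open_lc0; auto.
  - destruct (Nat.eqb i k); reflexivity.
  - f_equal. rewrite !map_map. apply map_ext_Forall.
    induction IH; constructor; auto.
Qed.

Lemma fsubst_open s (Hs : sc s) A : forall k u,
  fsubst s (open_form k u A) = open_form k (tsubst s u) (fsubst s A).
Proof.
  induction A; intros k v; simpl; try (f_equal; auto; fail).
  destruct a; simpl. f_equal. f_equal. rewrite !map_map. apply map_ext. intros; apply tsubst_open; auto.
Qed.

Lemma fsubst_inst s (Hs : sc s) A u :
  fsubst s (instantiate A u) = instantiate (fsubst s A) (tsubst s u).
Proof. apply fsubst_open; auto. Qed.

Lemma tsubst_lc s (Hs : sc s) t : lc_term_at 0 t -> lc_term_at 0 (tsubst s t).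
Proof.
  induction t as [x|i|f ts IH] using term_ind'; simpl; intros H; auto.
  pose proof (proj1 (lc_tapp _ f ts) H) as H'. apply (proj2 (lc_tapp _ f _)). apply Forall_map.
  clear H. induction IH; inversion H'; subst; constructor; auto.
Qed.

Lemma tsubst_ext s s' t : (forall x, occurs_term x t -> s x = s' x) -> tsubst s t = tsubst s' t.
Proof.
  induction t as [x|i|f ts IH] using term_ind'; intros H.
  - apply H. simpl. auto.
  - reflexivity.
  - assert (H' : forall x, Exists (occurs_term x) ts -> s x = s' x).
    { intros x Hx. apply H. apply (proj2 (occ_tapp _ f _)). auto. }
    clear H. simpl. f_equal. apply map_ext_Forall.
    induction IH; constructor.
    + apply H. intros y Hy. apply H'. constructor. auto.
    + apply IHIH. intros y Hy. apply H'. constructor 2. auto.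
Qed.

Lemma fsubst_ext s s' A : (forall x, occurs_form x A -> s x = s' x) -> fsubst s A = fsubst s' A.
Proof.
  induction A; simpl; intros H; try (f_equal; auto; fail).
  - destruct a as [p ts]; simpl in *. f_equal. f_equal. apply map_ext_in.
    intros t Ht. apply tsubst_ext. intros x Hx. apply H. apply Exists_exists. eauto.
  all: f_equal; auto.
Qed.

Lemma tsubst_id t : tsubst (fun x => tfvar x) t = t.
Proof.
  induction t as [x|i|f ts IH] using term_ind'; simpl; auto.
  f_equal. apply map_id_Forall. auto.
Qed.

Lemma fsubst_id A : fsubst (fun x => tfvar x) A = A.
Proof.
  induction A; simpl; f_equal; auto.
  destruct a; simpl; f_equal. apply map_id_Forall. apply Forall_forall. intros; apply tsubst_id.
Qed.

Lemma fsubst_notocc s A : (forall x, occurs_form x A -> s x = tfvar x) -> fsubst s A = A.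
Proof. intros H. rewrite (fsubst_ext s (fun x => tfvar x)); auto. apply fsubst_id. Qed.

Fixpoint vmax_t (t : term) : nat :=
  match t with
  | tfvar x => x
  | tbvar _ => 0
  | tapp f ts => list_max (map vmax_t ts)
  end.

Definition vmax_a (a : atom fsym psym) : nat :=
  match a with mkatom _ ts => list_max (map vmax_t ts) end.

Fixpoint vmax_f (A : formula) : nat :=
  match A with
  | fatom a => vmax_a a
  | fneg _ B => vmax_f B
  | fand _ B C => max (vmax_f B) (vmax_f C)
  | fimp _ _ B C => max (vmax_f B) (vmax_f C)
  | fall _ B => vmax_f B
  end.

Definition vmax_s (G : sequent Role fsym psym) : nat := list_max (map (fun p => vmax_f (snd p)) G).

Lemma list_max_in l a : In a l -> a <= list_max l.
Proof. intros H. assert (H2 := proj1 (list_max_le l (list_max l)) (le_n _)).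
  rewrite Forall_forall in H2. auto. Qed.

Lemma occ_vmax_t x t : occurs_term x t -> x <= vmax_t t.
Proof.
  induction t as [y|i|f ts IH] using term_ind'; simpl; intros H; try lia; try contradiction.
  pose proof (proj1 (occ_tapp _ f ts) H) as H'. apply Exists_exists in H'. clear H. rename H' into H. destruct H as [t [Ht Hx]].
  rewrite Forall_forall in IH. eapply Nat.le_trans. apply IH; eauto.
  apply list_max_in. apply in_map. auto.
Qed.

Lemma occ_vmax_f x A : occurs_form x A -> x <= vmax_f A.
Proof.
  induction A; simpl; intros H; try tauto.
  { destruct a as [p ts]; simpl in *. apply Exists_exists in H. destruct H as [t [Ht Hx]].
    eapply Nat.le_trans. apply occ_vmax_t; eauto. apply list_max_in. apply in_map. auto. }
  all: try (destruct H; [specialize (IHA1 H)|specialize (IHA2 H)]; lia); auto.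
Qed.

Lemma occ_vmax_s x G : occurs_seq x G -> x <= vmax_s G.
Proof.
  intros [p [Hp Hx]]. eapply Nat.le_trans. apply occ_vmax_f; eauto.
  apply list_max_in. apply in_map_iff. eauto.
Qed.

Lemma fresh_seq G : exists z, ~ occurs_seq z G.
Proof. exists (S (vmax_s G)). intros H. apply occ_vmax_s in H. lia. Qed.

Lemma occ_seq_in x G R A : In (R, A) G -> occurs_form x A -> occurs_seq x G.
Proof. intros. exists (R, A). auto. Qed.

Lemma occ_seq_perm x G G' : Permutation G G' -> occurs_seq x G -> occurs_seq x G'.
Proof. intros HP [p [Hp Hx]]. exists p. split; auto. eapply Permutation_in; eauto. Qed.

Lemma occ_seq_app x G1 G2 : occurs_seq x (G1 ++ G2) <-> occurs_seq x G1 \/ occurs_seq x G2.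
Proof.
  split.
  - intros [p [Hp Hx]]. apply in_app_or in Hp. destruct Hp; [left|right]; exists p; auto.
  - intros [[p [Hp Hx]]|[p [Hp Hx]]]; exists p; split; auto; apply in_or_app; auto.
Qed.

Lemma occ_seq_cons x p G : occurs_seq x (p :: G) <-> occurs_form x (snd p) \/ occurs_seq x G.
Proof.
  split.
  - intros [q [[Hq|Hq] Hx]]; [subst; left; auto | right; exists q; auto].
  - intros [H|[q [Hq Hx]]]; [exists p; simpl; auto | exists q; simpl; auto].
Qed.

Lemma ssubst_notocc s G : (forall x, occurs_seq x G -> s x = tfvar x) -> ssubst s G = G.
Proof.
  intros H. unfold ssubst. apply map_id_Forall. apply Forall_forall. intros [R A] Hin. simpl.
  f_equal. apply fsubst_notocc. intros x Hx. apply H. exists (R, A). auto.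
Qed.

Lemma ssubst_ext s s' G : (forall x, occurs_seq x G -> s x = s' x) -> ssubst s G = ssubst s' G.
Proof.
  intros H. unfold ssubst. apply map_ext_in. intros [R A] Hin. simpl.
  f_equal. apply fsubst_ext. intros x Hx. apply H. exists (R, A). auto.
Qed.

Definition sing (y : nat) (t : term) : nat -> term := fun x => if Nat.eqb x y then t else tfvar x.

Lemma sc_sing y t : lc_term_at 0 t -> sc (sing y t).
Proof. intros H x. unfold sing. destruct (Nat.eqb x y); simpl; auto. Qed.

Lemma sing_notocc_f y t A : ~ occurs_form y A -> fsubst (sing y t) A = A.
Proof.
  intros H. apply fsubst_notocc. intros x Hx. unfold sing.
  destruct (Nat.eqb_spec x y); subst; tauto.
Qed.

Lemma sing_notocc_s y t G : ~ occurs_seq y G -> ssubst (sing y t) G = G.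
Proof.
  intros H. apply ssubst_notocc. intros x Hx. unfold sing.
  destruct (Nat.eqb_spec x y); subst; tauto.
Qed.

Lemma sing_inst y t A : lc_term_at 0 t -> ~ occurs_form y A ->
  fsubst (sing y t) (instantiate A (tfvar y)) = instantiate A t.
Proof.
  intros Ht Hy. rewrite fsubst_inst by (apply sc_sing; auto).
  rewrite sing_notocc_f by auto. simpl. unfold sing. rewrite Nat.eqb_refl. reflexivity.
Qed.

Fixpoint fsize (A : formula) : nat :=
  match A with
  | fatom _ => 0
  | fneg _ B => S (fsize B)
  | fand _ B C => S (fsize B + fsize C)
  | fimp _ _ B C => S (fsize B + fsize C)
  | fall _ B => S (fsize B)
  end.

Lemma fsize_open A : forall k u, fsize (open_form k u A) = fsize A.
Proof. induction A; intros; simpl; auto. Qed.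

Lemma fsize_inst A u : fsize (instantiate A u) = fsize A.
Proof. apply fsize_open. Qed.

End Syn.

Section Der.
Context {Role fsym psym : Type}.
Notation term := (term fsym).
Notation formula := (formula Role fsym psym).
Notation seqt := (sequent Role fsym psym).
Implicit Types (t u : term) (A B : formula) (G D : seqt) (s : nat -> term).

Inductive dh : nat -> seqt -> Prop :=
| h_id : forall h G (P : list (rset Role)) a D, P <> [] -> is_partition P ->
    Permutation D (map (fun R => (R, fatom a)) P ++ G) -> dh h D
| h_weaken : forall h G R A D, dh h ((R,A)::(R,A)::G) -> Permutation D ((R,A)::G) -> dh (S h) D
| h_neg : forall h G R f A D, dh h ((preim f R, A)::G) -> Permutation D ((R, fneg f A)::G) -> dh (S h) D
| h_and_l : forall h G R U A B D, ~uf_mem U R -> dh h ((R,A)::G) ->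
    Permutation D ((R, fand U A B)::G) -> dh (S h) D
| h_and_r : forall h G R U A B D, ~uf_mem U R -> dh h ((R,B)::G) ->
    Permutation D ((R, fand U A B)::G) -> dh (S h) D
| h_and_pos : forall h G R U A B D, uf_mem U R -> dh h ((R,A)::G) -> dh h ((R,B)::G) ->
    Permutation D ((R,fand U A B)::G) -> dh (S h) D
| h_imp_neg : forall h G R f U A B D, ~uf_mem U R -> dh h ((preim f R, A)::(R,B)::G) ->
    Permutation D ((R, fimp f U A B)::G) -> dh (S h) D
| h_imp_pos : forall h G1 G2 R f U A B D, uf_mem U R -> dh h ((preim f R,A)::G1) -> dh h ((R,B)::G2) ->
    Permutation D ((R, fimp f U A B)::G1++G2) -> dh (S h) D
| h_all_neg : forall h G R U A t D, ~uf_mem U R -> is_term t -> dh h ((R, instantiate A t)::G) ->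
    Permutation D ((R, fall U A)::G) -> dh (S h) D
| h_all_pos : forall h G R U A x D, uf_mem U R -> ~occurs_seq x G -> ~occurs_form x A ->
    dh h ((R, instantiate A (tfvar x))::G) -> Permutation D ((R, fall U A)::G) -> dh (S h) D.

Lemma dh_perm h G G' : dh h G -> Permutation G G' -> dh h G'.
Proof.
  intros H HP. assert (HP' : Permutation G' G) by (apply Permutation_sym; auto).
  destruct H.
  - eapply h_id; [..|match goal with Hp : Permutation D _ |- _ => exact (Permutation_trans HP' Hp) end]; eassumption.
  - eapply h_weaken; [..|match goal with Hp : Permutation D _ |- _ => exact (Permutation_trans HP' Hp) end]; eassumption.
  - eapply h_neg; [..|match goal with Hp : Permutation D _ |- _ => exact (Permutation_trans HP' Hp) end]; eassumption.
  - eapply h_and_l; [..|match goal with Hp : Permutation D _ |- _ => exact (Permutation_trans HP' Hp) end]; eassumption.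
  - eapply h_and_r; [..|match goal with Hp : Permutation D _ |- _ => exact (Permutation_trans HP' Hp) end]; eassumption.
  - eapply h_and_pos; [..|match goal with Hp : Permutation D _ |- _ => exact (Permutation_trans HP' Hp) end]; eassumption.
  - eapply h_imp_neg; [..|match goal with Hp : Permutation D _ |- _ => exact (Permutation_trans HP' Hp) end]; eassumption.
  - eapply h_imp_pos; [..|match goal with Hp : Permutation D _ |- _ => exact (Permutation_trans HP' Hp) end]; eassumption.
  - eapply h_all_neg; [..|match goal with Hp : Permutation D _ |- _ => exact (Permutation_trans HP' Hp) end]; eassumption.
  - eapply h_all_pos; [..|match goal with Hp : Permutation D _ |- _ => exact (Permutation_trans HP' Hp) end]; eassumption.
Qed.

Lemma dh_mono h G : dh h G -> forall h', h <= h' -> dh h' G.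
Proof.
  induction 1; intros h' Hle;
  try (destruct h' as [|h']; [lia|]; assert (Hle' : h <= h') by lia).
  all: try (eapply h_id; [..|eassumption]; eassumption).
  - eapply h_weaken; [..|eassumption]; first [eassumption | apply IHdh; lia | apply IHdh1; lia | apply IHdh2; lia].
  - eapply h_neg; [..|eassumption]; first [eassumption | apply IHdh; lia | apply IHdh1; lia | apply IHdh2; lia].
  - eapply h_and_l; [..|eassumption]; first [eassumption | apply IHdh; lia | apply IHdh1; lia | apply IHdh2; lia].
  - eapply h_and_r; [..|eassumption]; first [eassumption | apply IHdh; lia | apply IHdh1; lia | apply IHdh2; lia].
  - eapply h_and_pos; [..|eassumption]; first [eassumption | apply IHdh; lia | apply IHdh1; lia | apply IHdh2; lia].
  - eapply h_imp_neg; [..|eassumption]; first [eassumption | apply IHdh; lia | apply IHdh1; lia | apply IHdh2; lia].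
  - eapply h_imp_pos; [..|eassumption]; first [eassumption | apply IHdh; lia | apply IHdh1; lia | apply IHdh2; lia].
  - eapply h_all_neg; [..|eassumption]; first [eassumption | apply IHdh; lia | apply IHdh1; lia | apply IHdh2; lia].
  - eapply h_all_pos; [..|eassumption]; first [eassumption | apply IHdh; lia | apply IHdh1; lia | apply IHdh2; lia].
Qed.

Lemma der_dh G : derivable G -> exists h, dh h G.
Proof.
  induction 1;
  repeat match goal with H : exists _, _ |- _ => destruct H end.
  - eexists. eapply dh_perm; eauto.
  - exists 0. eapply h_id; eauto.
  - eexists. eapply h_weaken; eauto.
  - eexists. eapply h_neg; eauto.
  - eexists. eapply h_and_l; eauto.
  - eexists. eapply h_and_r; eauto.
  - exists (S (max x x0)). eapply h_and_pos; eauto; eapply dh_mono; eauto; lia.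
  - eexists. eapply h_imp_neg; eauto.
  - exists (S (max x x0)). eapply h_imp_pos; eauto; eapply dh_mono; eauto; lia.
  - eexists. eapply h_all_neg; eauto.
  - eexists. eapply h_all_pos; eauto.
Qed.

Lemma dh_der h G : dh h G -> derivable G.
Proof.
  induction 1; (eapply d_exch; [apply Permutation_sym; eassumption|]).
  - apply d_id; auto.
  - apply d_weaken; auto.
  - apply d_neg; auto.
  - apply d_and_neg_l; auto.
  - apply d_and_neg_r; auto.
  - apply d_and_pos; auto.
  - apply d_imp_neg; auto.
  - apply d_imp_pos; auto.
  - eapply d_all_neg; eauto.
  - eapply d_all_pos; eauto.
Qed.

Definition der G := exists h, dh h G.

Lemma der_perm G G' : der G -> Permutation G G' -> der G'.
Proof. intros [h H] HP. exists h. eapply dh_perm; eauto. Qed.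

Lemma ssubst_app s G1 G2 : ssubst s (G1 ++ G2) = ssubst s G1 ++ ssubst s G2.
Proof. apply map_app. Qed.

Lemma dh_subst h G : dh h G -> forall s, sc s -> dh h (ssubst s G).
Proof.
  induction 1; intros s Hs;
  (eapply dh_perm; [|apply Permutation_sym; apply Permutation_map; eassumption]);
  unfold ssubst; simpl; try rewrite map_app.
  - eapply h_id with (a := asubst s a); eauto.
    rewrite map_map. simpl. apply Permutation_refl.
  - eapply h_weaken; [exact (IHdh s Hs)| apply Permutation_refl].
  - eapply h_neg; [exact (IHdh s Hs)| apply Permutation_refl].
  - eapply h_and_l; [|exact (IHdh s Hs)| apply Permutation_refl]; simpl; auto.
  - eapply h_and_r; [|exact (IHdh s Hs)| apply Permutation_refl]; simpl; auto.
  - eapply h_and_pos; [|exact (IHdh1 s Hs)|exact (IHdh2 s Hs)| apply Permutation_refl]; simpl; auto.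
  - eapply h_imp_neg; [|exact (IHdh s Hs)| apply Permutation_refl]; simpl; auto.
  - eapply h_imp_pos; [|exact (IHdh1 s Hs)|exact (IHdh2 s Hs)| apply Permutation_refl]; simpl; auto.
  - specialize (IHdh s Hs). unfold ssubst in IHdh. simpl in IHdh. rewrite fsubst_inst in IHdh by auto.
    eapply h_all_neg with (t := tsubst s t) (R := R); [eassumption| apply tsubst_lc; auto | exact IHdh | apply Permutation_refl].
  - destruct (fresh_seq ((R, fsubst s A) :: ssubst s G)) as [z Hz].
    rewrite occ_seq_cons in Hz. simpl in Hz.
    set (s' := fun v => if Nat.eqb v x then tfvar z else s v).
    assert (Hs' : sc s'). { intros v. unfold s'. destruct (Nat.eqb v x); simpl; auto. }
    specialize (IHdh s' Hs'). simpl in IHdh. rewrite fsubst_inst in IHdh by auto.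
    assert (E1 : fsubst s' A = fsubst s A).
    { apply fsubst_ext. intros v Hv. unfold s'. destruct (Nat.eqb_spec v x); subst; tauto. }
    assert (E2 : ssubst s' G = ssubst s G).
    { apply ssubst_ext. intros v Hv. unfold s'. destruct (Nat.eqb_spec v x); subst; tauto. }
    rewrite E1, E2 in IHdh. simpl in IHdh. unfold s' in IHdh. rewrite Nat.eqb_refl in IHdh.
    eapply h_all_pos with (x := z) (R := R) (A := fsubst s A) (G := ssubst s G) (U := U); [exact H | tauto | tauto | exact IHdh | apply Permutation_refl].
Qed.

Lemma ssubst_cons s R A G : ssubst s ((R, A) :: G) = (R, fsubst s A) :: ssubst s G.
Proof. reflexivity. Qed.

Lemma dh_rename h R A y z G : ~ occurs_form y A -> ~ occurs_seq y G ->
  dh h ((R, instantiate A (tfvar y)) :: G) -> dh h ((R, instantiate A (tfvar z)) :: G).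
Proof.
  intros H1 H2 H. apply dh_subst with (s := sing y (tfvar z)) in H; [|apply sc_sing; simpl; auto].
  rewrite ssubst_cons in H.
  rewrite sing_inst, sing_notocc_s in H; simpl; auto.
Qed.

Lemma dh_inst h R A y t G : is_term t -> ~ occurs_form y A -> ~ occurs_seq y G ->
  dh h ((R, instantiate A (tfvar y)) :: G) -> dh h ((R, instantiate A t) :: G).
Proof.
  intros Ht H1 H2 H. apply dh_subst with (s := sing y t) in H; [|apply sc_sing; auto].
  rewrite ssubst_cons in H.
  rewrite sing_inst, sing_notocc_s in H; auto.
Qed.

End Der.

Section Weak.
Context {Role fsym psym : Type}.
Notation term := (term fsym).
Notation formula := (formula Role fsym psym).
Notation seqt := (sequent Role fsym psym).
Implicit Types (t u : term) (A B : formula) (G D : seqt) (s : nat -> term).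

Lemma dh_weak h : forall G D0, dh h G -> dh h (G ++ D0).
Proof.
  induction h as [h IH] using (well_founded_induction lt_wf).
  intros G0 D0 H. destruct H.
  - eapply h_id with (G := G ++ D0); [eassumption|eassumption|].
    rewrite app_assoc. apply Permutation_app_tail. eassumption.
  - eapply h_weaken; [exact (IH h ltac:(lia) _ D0 H)|exact (Permutation_app_tail D0 H0)].
  - eapply h_neg; [exact (IH h ltac:(lia) _ D0 H)|exact (Permutation_app_tail D0 H0)].
  - eapply h_and_l; [eassumption|exact (IH h ltac:(lia) _ D0 H0)|exact (Permutation_app_tail D0 H1)].
  - eapply h_and_r; [eassumption|exact (IH h ltac:(lia) _ D0 H0)|exact (Permutation_app_tail D0 H1)].
  - eapply h_and_pos; [eassumption|exact (IH h ltac:(lia) _ D0 H0)|exact (IH h ltac:(lia) _ D0 H1)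
      |exact (Permutation_app_tail D0 H2)].
  - eapply h_imp_neg; [eassumption|exact (IH h ltac:(lia) _ D0 H0)|exact (Permutation_app_tail D0 H1)].
  - eapply h_imp_pos with (G1 := G1 ++ D0); [eassumption|exact (IH h ltac:(lia) _ D0 H0)|exact H1|].
    eapply Permutation_trans; [exact (Permutation_app_tail D0 H2)|]. psolve.
  - eapply h_all_neg; [eassumption|eassumption|exact (IH h ltac:(lia) _ D0 H1)|exact (Permutation_app_tail D0 H2)].
  - destruct (fresh_seq ((R, A) :: G ++ D0)) as [z Hz].
    rewrite occ_seq_cons, occ_seq_app in Hz. simpl in Hz.
    apply (dh_rename h R A x z G H1 H0) in H2.
    eapply h_all_pos with (x := z) (A := A) (R := R) (U := U) (G := G ++ D0); [eassumption| |tauto|exact (IH h ltac:(lia) _ D0 H2)|exact (Permutation_app_tail D0 H3)].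
    rewrite occ_seq_app. tauto.
Qed.

Lemma der_weak G D0 : der G -> der (G ++ D0).
Proof. intros [h H]. exists h. apply dh_weak. auto. Qed.

Lemma der_weak_l G D0 : der G -> der (D0 ++ G).
Proof. intros H. eapply der_perm. apply der_weak. exact H. apply Permutation_app_comm. Qed.

Lemma der_contr_in x G : In x G -> der (x :: G) -> der G.
Proof.
  intros Hin [h H]. apply in_split in Hin. destruct Hin as [l1 [l2 E]]. subst.
  destruct x as [R A]. exists (S h).
  eapply h_weaken with (G := l1 ++ l2) (R := R) (A := A).
  - eapply dh_perm; [exact H|]. psolve.
  - psolve.
Qed.

Lemma der_contr_incl M G : incl M G -> der (M ++ G) -> der G.
Proof.
  induction M as [|x M IH]; simpl; intros Hinc H; auto.
  apply IH. { intros y Hy. apply Hinc. simpl. auto. }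
  apply der_contr_in with x. { apply in_or_app. right. apply Hinc. simpl. auto. } auto.
Qed.

End Weak.

Definition upd {X} (F : nat -> X) (i : nat) (x : X) : nat -> X :=
  fun j => if Nat.eqb j i then x else F j.

Lemma upd_eq {X} (F : nat -> X) i x : upd F i x i = x.
Proof. unfold upd. rewrite Nat.eqb_refl. auto. Qed.
Lemma upd_neq {X} (F : nat -> X) i x j : j <> i -> upd F i x j = F j.
Proof. unfold upd. intros H. destruct (Nat.eqb_spec j i); congruence. Qed.

Definition rest {X} (F : nat -> list X) n i :=
  concat (map F (seq 0 i)) ++ concat (map F (seq (S i) (n - S i))).

Lemma seq_split n i : i < n -> seq 0 n = seq 0 i ++ i :: seq (S i) (n - S i).
Proof.
  intros H. replace n with (i + S (n - S i)) at 1 by lia. rewrite seq_app. simpl. reflexivity.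
Qed.

Lemma concat_split {X} (F : nat -> list X) n i : i < n ->
  Permutation (concat (map F (seq 0 n))) (F i ++ rest F n i).
Proof.
  intros H. rewrite (seq_split n i H). rewrite map_app, concat_app. simpl. unfold rest. psolve.
Qed.

Lemma rest_upd {X} (F : nat -> list X) n i L : rest (upd F i L) n i = rest F n i.
Proof.
  unfold rest. f_equal; f_equal; apply map_ext_in; intros j Hj; apply in_seq in Hj; apply upd_neq; lia.
Qed.

Lemma concat_upd {X} (F : nat -> list X) n i L : i < n ->
  Permutation (concat (map (upd F i L) (seq 0 n))) (L ++ rest F n i).
Proof.
  intros H. rewrite concat_split with (i := i) by auto. rewrite upd_eq, rest_upd. apply Permutation_refl.
Qed.

Definition hsum (hs : nat -> nat) n := list_sum (map hs (seq 0 n)).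

Lemma hsum_upd hs n i h : i < n -> h < hs i -> hsum (upd hs i h) n < hsum hs n.
Proof.
  intros H1 H2. unfold hsum. rewrite (seq_split n i H1). rewrite !map_app, !list_sum_app. simpl.
  rewrite upd_eq.
  assert (E1 : map (upd hs i h) (seq 0 i) = map hs (seq 0 i)).
  { apply map_ext_in; intros j Hj; apply in_seq in Hj; apply upd_neq; lia. }
  assert (E2 : map (upd hs i h) (seq (S i) (n - S i)) = map hs (seq (S i) (n - S i))).
  { apply map_ext_in; intros j Hj; apply in_seq in Hj; apply upd_neq; lia. }
  rewrite E1, E2. lia.
Qed.

Lemma fin_choice {X} (d : X) n (P : nat -> X -> Prop) :
  (forall i, i < n -> exists x, P i x) -> exists f, forall i, i < n -> P i (f i).
Proof.
  induction n as [|n IH]; intros H.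
  - exists (fun _ => d). intros; lia.
  - destruct IH as [f Hf]. { intros i Hi. apply H. lia. }
    destruct (H n (Nat.lt_succ_diag_r n)) as [x Hx].
    exists (upd f n x). intros i Hi. destruct (Nat.eq_dec i n).
    + subst. rewrite upd_eq. auto.
    + rewrite upd_neq by auto. apply Hf. lia.
Qed.

Lemma concat_map_perm {X} (F G : nat -> list X) l :
  (forall i, In i l -> Permutation (F i) (G i)) -> Permutation (concat (map F l)) (concat (map G l)).
Proof.
  induction l as [|a l IH]; simpl; intros H; auto.
  apply Permutation_app; auto.
Qed.

Lemma concat_map_app {X} (F G : nat -> list X) l :
  Permutation (concat (map (fun i => F i ++ G i) l)) (concat (map F l) ++ concat (map G l)).
Proof.
  induction l as [|a l IH]; simpl; auto.
  rewrite IH. psolve.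
Qed.

Lemma incl_concat_const {X} (L : list X) l : incl (concat (map (fun _ : nat => L) l)) L.
Proof.
  intros y Hy. apply in_concat in Hy. destruct Hy as [x [Hx Hy]]. apply in_map_iff in Hx.
  destruct Hx as [? [E _]]. subst. auto.
Qed.

Lemma perm_pick {X} (Y Z : X) k ctx G :
  Permutation (Y :: ctx) (repeat Z k ++ G) ->
  (Y = Z /\ 1 <= k /\ Permutation ctx (repeat Z (k - 1) ++ G)) \/
  (exists G', Permutation G (Y :: G') /\ Permutation ctx (repeat Z k ++ G')).
Proof.
  intros HP. assert (Hin : In Y (repeat Z k ++ G)) by (eapply Permutation_in; [exact HP| simpl; auto]).
  apply in_app_or in Hin. destruct Hin as [Hin|Hin].
  - left. destruct k as [|k]; [simpl in *; contradiction|]. apply repeat_spec in Hin. subst.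
    split; auto. split; [lia|]. simpl in HP. replace (S k - 1) with k by lia.
    apply Permutation_cons_inv in HP. auto.
  - right. apply in_split in Hin. destruct Hin as [l1 [l2 E]]. subst. exists (l1 ++ l2). split.
    + psolve.
    + assert (HP' : Permutation (Y :: ctx) ((repeat Z k ++ l1) ++ Y :: l2)) by (rewrite HP; psolve).
      apply Permutation_cons_app_inv in HP'. rewrite HP'. psolve.
Qed.

Lemma perm_split_rep {X} (Z : X) G1 : forall G2 k G,
  Permutation (G1 ++ G2) (repeat Z k ++ G) ->
  exists k1 k2 Ga Gb, k = k1 + k2 /\ Permutation G (Ga ++ Gb) /\
    Permutation G1 (repeat Z k1 ++ Ga) /\ Permutation G2 (repeat Z k2 ++ Gb).
Proof.
  induction G1 as [|y G1 IH]; intros G2 k G HP.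
  - exists 0, k, [], G. simpl. repeat split; auto.
  - simpl in HP. apply perm_pick in HP. destruct HP as [[E [Hk HP]]|[G' [HG HP]]].
    + subst. destruct (IH _ _ _ HP) as [k1 [k2 [Ga [Gb [E1 [E2 [E3 E4]]]]]]].
      exists (S k1), k2, Ga, Gb. repeat split; auto. lia. simpl. apply perm_skip. auto.
    + destruct (IH _ _ _ HP) as [k1 [k2 [Ga [Gb [E1 [E2 [E3 E4]]]]]]].
      exists k1, k2, (y :: Ga), Gb. repeat split; auto.
      * rewrite HG, E2. reflexivity.
      * rewrite E3. psolve.
Qed.

Section PD.
Context {Role : Type}.

Fixpoint PD (L : list (rset Role)) : Prop :=
  match L with
  | [] => True
  | R :: L' => (forall R', In R' L' -> forall r, R r -> R' r -> False) /\ PD L'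
  end.

Lemma PD_nth L : PD L <-> (forall i j r, i < length L -> j < length L -> i <> j ->
     nth i L rfull r -> nth j L rfull r -> False).
Proof.
  induction L as [|R L IH]; simpl.
  - split; auto. intros; lia.
  - split.
    + intros [H1 H2] i j r Hi Hj Hij Hr1 Hr2.
      destruct i as [|i]; destruct j as [|j].
      * lia.
      * apply (H1 (nth j L rfull)) with r; [apply nth_In; simpl in Hj; lia| exact Hr1 | exact Hr2].
      * apply (H1 (nth i L rfull)) with r; [apply nth_In; simpl in Hi; lia| exact Hr2 | exact Hr1].
      * apply (proj1 IH H2 i j r); [lia|lia|lia|exact Hr1|exact Hr2].
    + intros H. split.
      * intros R' HR' r Hr1 Hr2. apply In_nth with (d := rfull) in HR'. destruct HR' as [j [Hj E]].
        apply (H 0 (S j) r); simpl; try lia; subst; auto.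
      * apply IH. intros i j r Hi Hj Hij Hr1 Hr2. apply (H (S i) (S j) r); simpl; auto; lia.
Qed.

Lemma PD_perm (L L' : list (rset Role)) : Permutation L L' -> PD L -> PD L'.
Proof.
  induction 1; simpl; auto.
  - intros [H1 H2]. split; auto. intros R' HR'. apply H1. eapply Permutation_in; [symmetry; eauto| auto].
  - intros [H1 [H2 H3]]. split; [|split; auto].
    + intros R' [E|HR'] r Hr1 Hr2; [subst; eapply H1; simpl; eauto|].
      eapply H2; eauto.
    + intros R' HR' r Hr1 Hr2. eapply H1; simpl; eauto.
Qed.

Lemma PD_app L1 L2 : PD (L1 ++ L2) <-> PD L1 /\ PD L2 /\
  (forall R R', In R L1 -> In R' L2 -> forall r, R r -> R' r -> False).
Proof.
  induction L1 as [|R L1 IH]; simpl.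
  - split; [tauto|]. intros [_ [H _]]; auto.
  - rewrite IH. split.
    + intros [H1 [H2 [H3 H4]]]. split; [split|split]; auto.
      * intros R' HR'. apply H1. apply in_or_app; auto.
      * intros R0 R' [E|HR0] HR' r Hr1 Hr2; [subst; eapply H1; [apply in_or_app; right; eauto|eauto|eauto]|].
        eapply H4; eauto.
    + intros [[H1 H2] [H3 H4]]. split; [|split; [auto|split; auto]].
      * intros R' HR'. apply in_app_or in HR'. destruct HR' as [HR'|HR']; [apply H1; auto|].
        intros r Hr1 Hr2. eapply H4; [left; reflexivity| exact HR'| exact Hr1| exact Hr2].
      * intros R0 R' HR0 HR'. apply H4; simpl; auto.
Qed.

Lemma is_partition_iff (L : list (rset Role)) : is_partition L <-> PD L /\ (forall r, exists R, In R L /\ R r).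
Proof. unfold is_partition. rewrite PD_nth. tauto. Qed.

Lemma is_partition_perm (L L' : list (rset Role)) : Permutation L L' -> is_partition L -> is_partition L'.
Proof.
  rewrite !is_partition_iff. intros HP [H1 H2]. split; [eapply PD_perm; eauto|].
  intros r. destruct (H2 r) as [R [HR Hr]]. exists R. split; auto. eapply Permutation_in; eauto.
Qed.

Lemma PD_concat (F : nat -> list (rset Role)) l : NoDup l ->
  (forall i, In i l -> PD (F i)) ->
  (forall i j R R' r, In i l -> In j l -> i <> j -> In R (F i) -> In R' (F j) -> R r -> R' r -> False) ->
  PD (concat (map F l)).
Proof.
  induction l as [|a l IH]; simpl; intros Hnd H1 H2; auto.
  inversion Hnd; subst. apply PD_app. split; [auto|split].
  - apply IH; auto. intros; eapply H2; eauto.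
  - intros R R' HR HR' r Hr1 Hr2. apply in_concat in HR'. destruct HR' as [x [Hx HR']].
    apply in_map_iff in Hx. destruct Hx as [j [E Hj]]. subst.
    eapply (H2 a j); eauto. intros E; subst; auto.
Qed.

End PD.

Section Main.
Context {Role fsym psym : Type}.
Notation term := (term fsym).
Notation formula := (formula Role fsym psym).
Notation seqt := (sequent Role fsym psym).
Implicit Types (t u : term) (A B C : formula) (G D : seqt) (s : nat -> term).

Lemma der_neg G R f A : der ((preim f R, A)::G) -> der ((R, fneg f A)::G).
Proof. intros [h H]. exists (S h). eapply h_neg; [exact H|apply Permutation_refl]. Qed.
Lemma der_weaken G R A : der ((R,A)::(R,A)::G) -> der ((R,A)::G).
Proof. intros [h H]. exists (S h). eapply h_weaken; [exact H|apply Permutation_refl]. Qed.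
Lemma der_and_l G R U A B : ~ uf_mem U R -> der ((R,A)::G) -> der ((R, fand U A B)::G).
Proof. intros HU [h H]. exists (S h). eapply h_and_l; [exact HU|exact H|apply Permutation_refl]. Qed.
Lemma der_and_r G R U A B : ~ uf_mem U R -> der ((R,B)::G) -> der ((R, fand U A B)::G).
Proof. intros HU [h H]. exists (S h). eapply h_and_r; [exact HU|exact H|apply Permutation_refl]. Qed.
Lemma der_and_pos G R U A B : uf_mem U R -> der ((R,A)::G) -> der ((R,B)::G) -> der ((R, fand U A B)::G).
Proof. intros HU [h1 H1] [h2 H2]. exists (S (max h1 h2)).
  eapply h_and_pos; [exact HU|eapply dh_mono; [exact H1|lia]|eapply dh_mono; [exact H2|lia]|apply Permutation_refl]. Qed.
Lemma der_imp_neg G R f U A B : ~ uf_mem U R -> der ((preim f R, A)::(R,B)::G) -> der ((R, fimp f U A B)::G).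
Proof. intros HU [h H]. exists (S h). eapply h_imp_neg; [exact HU|exact H|apply Permutation_refl]. Qed.
Lemma der_imp_pos G1 G2 R f U A B : uf_mem U R -> der ((preim f R, A)::G1) -> der ((R,B)::G2) ->
  der ((R, fimp f U A B)::G1 ++ G2).
Proof. intros HU [h1 H1] [h2 H2]. exists (S (max h1 h2)).
  eapply h_imp_pos; [exact HU|eapply dh_mono; [exact H1|lia]|eapply dh_mono; [exact H2|lia]|apply Permutation_refl]. Qed.
Lemma der_all_neg G R U A t : ~ uf_mem U R -> is_term t -> der ((R, instantiate A t)::G) -> der ((R, fall U A)::G).
Proof. intros HU Ht [h H]. exists (S h). eapply h_all_neg; [exact HU|exact Ht|exact H|apply Permutation_refl]. Qed.
Lemma der_all_pos G R U A x : uf_mem U R -> ~ occurs_seq x G -> ~ occurs_form x A ->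
  der ((R, instantiate A (tfvar x))::G) -> der ((R, fall U A)::G).
Proof. intros HU H1 H2 [h H]. exists (S h). eapply h_all_pos; [exact HU|exact H1|exact H2|exact H|apply Permutation_refl]. Qed.
Lemma der_id G (P : list (rset Role)) a : P <> [] -> is_partition P -> der (map (fun R => (R, fatom a)) P ++ G).
Proof. intros H1 H2. exists 0. eapply h_id; [exact H1|exact H2|apply Permutation_refl]. Qed.

Definition partC n (Rs : nat -> rset Role) :=
  (forall i j r, i < n -> j < n -> i <> j -> ~ Rs i r -> ~ Rs j r -> False) /\
  (forall r, exists i, i < n /\ ~ Rs i r).

Definition KeyInfo A (R : rset Role) (Gi Dl : seqt) : Prop :=
  match A with
  | fatom a => exists (P1 Q : list (rset Role)) G', is_partition (R :: P1 ++ Q) /\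
       (forall R', In R' P1 -> R' = R) /\ Permutation Gi (map (fun R => (R, fatom a)) Q ++ G')
  | fneg f B => der ((preim f R, B) :: Dl)
  | fand U B C => (~ uf_mem U R /\ der ((R,B)::Dl)) \/ (~ uf_mem U R /\ der ((R,C)::Dl)) \/
                  (uf_mem U R /\ der ((R,B)::Dl) /\ der ((R,C)::Dl))
  | fimp f U B C => (~ uf_mem U R /\ der ((preim f R,B)::(R,C)::Dl)) \/
                    (uf_mem U R /\ der ((preim f R,B)::Dl) /\ der ((R,C)::Dl))
  | fall U B => (~ uf_mem U R /\ exists t, is_term t /\ der ((R, instantiate B t)::Dl)) \/
                (uf_mem U R /\ forall t, is_term t -> der ((R, instantiate B t)::Dl))
  end.

Definition MCprop A n (Rs : nat -> rset Role) N := forall (Gs : nat -> seqt) ks hs, hsum hs n < N ->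
  (forall i, i < n -> dh (hs i) (repeat (Rs i, A) (ks i) ++ Gs i)) -> der (concat (map Gs (seq 0 n))).

Section Core.
Variables (A : formula) (n : nat) (Rs : nat -> rset Role) (N : nat) (Gs : nat -> seqt) (ks hs : nat -> nat).
Hypothesis IHN : MCprop A n Rs N.
Hypothesis HN : hsum hs n < S N.
Hypothesis Hd : forall i, i < n -> dh (hs i) (repeat (Rs i, A) (ks i) ++ Gs i).

Lemma core i h' k' E G1 : i < n -> h' < hs i -> dh h' (repeat (Rs i, A) k' ++ E ++ G1) ->
  der (E ++ G1 ++ rest Gs n i).
Proof.
  intros Hi Hh H.
  assert (Hs := hsum_upd hs n i h' Hi Hh).
  specialize (IHN (upd Gs i (E ++ G1)) (upd ks i k') (upd hs i h') ltac:(lia)).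
  eapply der_perm; [apply IHN|].
  - intros j Hj. destruct (Nat.eq_dec j i) as [->|Hne].
    + rewrite !upd_eq. auto.
    + rewrite !upd_neq by auto. auto.
  - rewrite concat_upd by auto. psolve.
Qed.

Lemma core' i h' k' E G1 G2 : i < n -> h' < hs i -> Permutation (Gs i) (G1 ++ G2) ->
  dh h' (repeat (Rs i, A) k' ++ E ++ G1) -> der (E ++ concat (map Gs (seq 0 n))).
Proof.
  intros Hi Hh HG H. eapply der_perm; [apply der_weak with (D0 := G2); apply (core i h' k' E G1 Hi Hh H)|].
  rewrite (concat_split Gs n i Hi). rewrite HG. psolve.
Qed.

End Core.

End Main.

Section Party.
Context {Role fsym psym : Type}.
Notation term := (term fsym).
Notation formula := (formula Role fsym psym).
Notation seqt := (sequent Role fsym psym).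
Implicit Types (t u : term) (A B C : formula) (G D : seqt) (s : nat -> term).

Lemma party A n (Rs : nat -> rset Role) N (Gs : nat -> seqt) ks hs (IHN : MCprop A n Rs N) (HN : hsum hs n < S N)
  (Hd : forall i, i < n -> dh (hs i) (repeat (Rs i, A) (ks i) ++ Gs i)) i (Hi : i < n) (Hk : 1 <= ks i) :
  KeyInfo A (Rs i) (Gs i) (concat (map Gs (seq 0 n))) \/ der (concat (map Gs (seq 0 n))).
Proof.
  pose proof (Hd i Hi) as H.
  remember (hs i) as h eqn:Eh. remember (repeat (Rs i, A) (ks i) ++ Gs i) as L eqn:EL.
  revert Eh EL.
  destruct H as [h0 G0 P a D0 Hne Hpart HP | h0 G0 R B D0 Hp HP | h0 G0 R f B D0 Hp HP
    | h0 G0 R U B C D0 HU Hp HP | h0 G0 R U B C D0 HU Hp HP | h0 G0 R U B C D0 HU Hp1 Hp2 HP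
    | h0 G0 R f U B C D0 HU Hp HP | h0 G1 G2 R f U B C D0 HU Hp1 Hp2 HP
    | h0 G0 R U B t D0 HU Ht Hp HP | h0 G0 R U B x D0 HU Hx1 Hx2 Hp HP ];
  intros Eh EL; subst D0.
  -
    destruct (classic (In (Rs i, A) (map (fun R => (R, fatom a)) P))) as [Hin|Hnin].
    + left. apply in_map_iff in Hin. destruct Hin as [R [ER HR]]. injection ER as E1 E2. subst R A.
      simpl. apply in_split in HR. destruct HR as [l1 [l2 ->]].
      destruct (ks i) as [|k] eqn:Ek; [lia|]. simpl in HP.
      rewrite map_app in HP. simpl in HP.
      assert (HP2 : Permutation (map (fun R => (R, fatom a)) (l1 ++ l2) ++ G0) (repeat (Rs i, fatom a) k ++ Gs i)).
      { apply Permutation_cons_inv with (a := (Rs i, fatom a)). rewrite HP. rewrite map_app. psolve. }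
      destruct (perm_split_rep _ _ _ _ _ HP2) as [k1 [k2 [Ga [Gb [Ek12 [HG [H1 H2]]]]]]].
      apply Permutation_sym, Permutation_map_inv in H1. destruct H1 as [l3 [El3 Hl3]].
      symmetry in El3. apply map_eq_app in El3. destruct El3 as [P1 [Q [-> [EP1 EQ]]]].
      exists P1, Q, Gb. split; [|split].
      * eapply is_partition_perm; [|exact Hpart].
        eapply Permutation_trans; [apply Permutation_sym, Permutation_middle|]. apply perm_skip. auto.
      * intros R' HR'. assert (Hr : In (R', @fatom Role fsym psym a) (repeat (Rs i, fatom a) k1)).
        { rewrite <- EP1. apply (in_map (fun R => (R, fatom a))). auto. }
        apply repeat_spec in Hr. injection Hr. auto.
      * rewrite HG, EQ. apply Permutation_refl.
    + right. destruct (perm_split_rep _ _ _ _ _ (Permutation_sym HP)) as [k1 [k2 [Ga [Gb [Ek12 [HG [H1 H2]]]]]]].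
      destruct k1 as [|k1].
      * simpl in H1. eapply der_perm; [apply der_id with (P := P) (a := a) (G := Gb ++ rest Gs n i); auto|].
        rewrite (concat_split Gs n i Hi), HG, <- H1. psolve.
      * exfalso. apply Hnin. eapply Permutation_in; [symmetry; exact H1|]. simpl. auto.
  -
    destruct (perm_pick _ _ _ _ _ (Permutation_sym HP)) as [[EY [_ HG0]]|[G' [HG HG0]]].
    + right. injection EY as -> ->.
      apply (core' A n Rs N Gs ks hs IHN HN Hd i h0 (S (S (ks i - 1))) [] (Gs i) [] Hi ltac:(lia));
        [rewrite app_nil_r; apply Permutation_refl|].
      eapply dh_perm; [exact Hp|]. simpl. rewrite HG0. psolve.
    + right. eapply der_perm.
      * apply der_weaken. apply (core A n Rs N Gs ks hs IHN HN Hd i h0 (ks i) [(R,B);(R,B)] G' Hi ltac:(lia)).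
        eapply dh_perm; [exact Hp|]. rewrite HG0. psolve.
      * rewrite (concat_split Gs n i Hi), HG. psolve.
  -
    destruct (perm_pick _ _ _ _ _ (Permutation_sym HP)) as [[EY [_ HG0]]|[G' [HG HG0]]].
    + left. injection EY as -> <-. simpl.
      apply (core' _ n Rs N Gs ks hs IHN HN Hd i h0 (ks i - 1) [(preim f (Rs i), B)] (Gs i) [] Hi ltac:(lia));
        [rewrite app_nil_r; apply Permutation_refl|].
      eapply dh_perm; [exact Hp|]. rewrite HG0. psolve.
    + right. eapply der_perm.
      * apply der_neg. apply (core _ n Rs N Gs ks hs IHN HN Hd i h0 (ks i) [(preim f R, B)] G' Hi ltac:(lia)).
        eapply dh_perm; [exact Hp|]. rewrite HG0. psolve.
      * rewrite (concat_split Gs n i Hi), HG. psolve.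
  -
    destruct (perm_pick _ _ _ _ _ (Permutation_sym HP)) as [[EY [_ HG0]]|[G' [HG HG0]]].
    + left. injection EY as -> <-. simpl. left. split; [exact HU|].
      apply (core' _ n Rs N Gs ks hs IHN HN Hd i h0 (ks i - 1) [(Rs i, B)] (Gs i) [] Hi ltac:(lia));
        [rewrite app_nil_r; apply Permutation_refl|].
      eapply dh_perm; [exact Hp|]. rewrite HG0. psolve.
    + right. eapply der_perm.
      * apply der_and_l; [exact HU|]. apply (core _ n Rs N Gs ks hs IHN HN Hd i h0 (ks i) [(R, B)] G' Hi ltac:(lia)).
        eapply dh_perm; [exact Hp|]. rewrite HG0. psolve.
      * rewrite (concat_split Gs n i Hi), HG. psolve.
  -
    destruct (perm_pick _ _ _ _ _ (Permutation_sym HP)) as [[EY [_ HG0]]|[G' [HG HG0]]].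
    + left. injection EY as -> <-. simpl. right. left. split; [exact HU|].
      apply (core' _ n Rs N Gs ks hs IHN HN Hd i h0 (ks i - 1) [(Rs i, C)] (Gs i) [] Hi ltac:(lia));
        [rewrite app_nil_r; apply Permutation_refl|].
      eapply dh_perm; [exact Hp|]. rewrite HG0. psolve.
    + right. eapply der_perm.
      * apply der_and_r; [exact HU|]. apply (core _ n Rs N Gs ks hs IHN HN Hd i h0 (ks i) [(R, C)] G' Hi ltac:(lia)).
        eapply dh_perm; [exact Hp|]. rewrite HG0. psolve.
      * rewrite (concat_split Gs n i Hi), HG. psolve.
  -
    destruct (perm_pick _ _ _ _ _ (Permutation_sym HP)) as [[EY [_ HG0]]|[G' [HG HG0]]].
    + left. injection EY as -> <-. simpl. right. right. split; [exact HU|]. split.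
      * apply (core' _ n Rs N Gs ks hs IHN HN Hd i h0 (ks i - 1) [(Rs i, B)] (Gs i) [] Hi ltac:(lia));
          [rewrite app_nil_r; apply Permutation_refl|].
        eapply dh_perm; [exact Hp1|]. rewrite HG0. psolve.
      * apply (core' _ n Rs N Gs ks hs IHN HN Hd i h0 (ks i - 1) [(Rs i, C)] (Gs i) [] Hi ltac:(lia));
          [rewrite app_nil_r; apply Permutation_refl|].
        eapply dh_perm; [exact Hp2|]. rewrite HG0. psolve.
    + right. eapply der_perm.
      * apply der_and_pos; [exact HU| |].
        -- apply (core _ n Rs N Gs ks hs IHN HN Hd i h0 (ks i) [(R, B)] G' Hi ltac:(lia)).
           eapply dh_perm; [exact Hp1|]. rewrite HG0. psolve.
        -- apply (core _ n Rs N Gs ks hs IHN HN Hd i h0 (ks i) [(R, C)] G' Hi ltac:(lia)).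
           eapply dh_perm; [exact Hp2|]. rewrite HG0. psolve.
      * rewrite (concat_split Gs n i Hi), HG. psolve.
  -
    destruct (perm_pick _ _ _ _ _ (Permutation_sym HP)) as [[EY [_ HG0]]|[G' [HG HG0]]].
    + left. injection EY as -> <-. simpl. left. split; [exact HU|].
      apply (core' _ n Rs N Gs ks hs IHN HN Hd i h0 (ks i - 1) [(preim f (Rs i), B); (Rs i, C)] (Gs i) [] Hi ltac:(lia));
        [rewrite app_nil_r; apply Permutation_refl|].
      eapply dh_perm; [exact Hp|]. rewrite HG0. psolve.
    + right. eapply der_perm.
      * apply der_imp_neg; [exact HU|].
        apply (core _ n Rs N Gs ks hs IHN HN Hd i h0 (ks i) [(preim f R, B); (R, C)] G' Hi ltac:(lia)).
        eapply dh_perm; [exact Hp|]. rewrite HG0. psolve.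
      * rewrite (concat_split Gs n i Hi), HG. psolve.
  -
    destruct (perm_pick _ _ _ _ _ (Permutation_sym HP)) as [[EY [_ HG0]]|[G' [HG HG0]]].
    + left. injection EY as -> <-. simpl. right. split; [exact HU|].
      destruct (perm_split_rep _ _ _ _ _ HG0) as [k1 [k2 [Ga [Gb [Ek12 [HGab [H1 H2]]]]]]].
      split.
      * apply (core' _ n Rs N Gs ks hs IHN HN Hd i h0 k1 [(preim f (Rs i), B)] Ga Gb Hi ltac:(lia) HGab).
        eapply dh_perm; [exact Hp1|]. rewrite H1. psolve.
      * apply (core' _ n Rs N Gs ks hs IHN HN Hd i h0 k2 [(Rs i, C)] Gb Ga Hi ltac:(lia)).
        { rewrite HGab. apply Permutation_app_comm. }
        eapply dh_perm; [exact Hp2|]. rewrite H2. psolve.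
    + right.
      destruct (perm_split_rep _ _ _ _ _ HG0) as [k1 [k2 [Ga [Gb [Ek12 [HGab [H1 H2]]]]]]].
      apply (der_perm ((R, fimp f U B C) :: Ga ++ Gb ++ rest Gs n i)).
      * apply der_contr_incl with (M := rest Gs n i).
        { intros y Hy. simpl. right. apply in_or_app. right. apply in_or_app. right. auto. }
        eapply der_perm; [apply der_imp_pos; [exact HU| |]|].
        -- apply (core _ n Rs N Gs ks hs IHN HN Hd i h0 k1 [(preim f R, B)] Ga Hi ltac:(lia)).
           eapply dh_perm; [exact Hp1|]. rewrite H1. psolve.
        -- apply (core _ n Rs N Gs ks hs IHN HN Hd i h0 k2 [(R, C)] Gb Hi ltac:(lia)).
           eapply dh_perm; [exact Hp2|]. rewrite H2. psolve.
        -- psolve.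
      * rewrite (concat_split Gs n i Hi), HG, HGab. psolve.
  -
    destruct (perm_pick _ _ _ _ _ (Permutation_sym HP)) as [[EY [_ HG0]]|[G' [HG HG0]]].
    + left. injection EY as -> <-. simpl. left. split; [exact HU|]. exists t. split; [exact Ht|].
      apply (core' _ n Rs N Gs ks hs IHN HN Hd i h0 (ks i - 1) [(Rs i, instantiate B t)] (Gs i) [] Hi ltac:(lia));
        [rewrite app_nil_r; apply Permutation_refl|].
      eapply dh_perm; [exact Hp|]. rewrite HG0. psolve.
    + right. eapply der_perm.
      * eapply der_all_neg; [exact HU|exact Ht|].
        apply (core _ n Rs N Gs ks hs IHN HN Hd i h0 (ks i) [(R, instantiate B t)] G' Hi ltac:(lia)).
        eapply dh_perm; [exact Hp|]. rewrite HG0. psolve.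
      * rewrite (concat_split Gs n i Hi), HG. psolve.
  -
    destruct (perm_pick _ _ _ _ _ (Permutation_sym HP)) as [[EY [_ HG0]]|[G' [HG HG0]]].
    + left. injection EY as -> <-. simpl. right. split; [exact HU|]. intros t Ht.
      apply (core' _ n Rs N Gs ks hs IHN HN Hd i h0 (ks i - 1) [(Rs i, instantiate B t)] (Gs i) [] Hi ltac:(lia));
        [rewrite app_nil_r; apply Permutation_refl|].
      eapply dh_perm; [apply (dh_inst h0 (Rs i) B x t G0 Ht Hx2 Hx1 Hp)|]. rewrite HG0. psolve.
    + right.
      assert (HPD : Permutation ((R, fall U B) :: G' ++ rest Gs n i) (concat (map Gs (seq 0 n)))).
      { rewrite (concat_split Gs n i Hi), HG. psolve. }
      destruct (fresh_seq ((R, B) :: concat (map Gs (seq 0 n)))) as [z Hz].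
      rewrite occ_seq_cons in Hz. simpl in Hz.
      pose proof (dh_rename h0 R B x z G0 Hx2 Hx1 Hp) as Hp'.
      eapply der_perm; [|exact HPD].
      eapply der_all_pos with (x := z); [exact HU| | |].
      * intros Hc. apply Hz. right. eapply occ_seq_perm; [exact HPD|]. apply occ_seq_cons. right. exact Hc.
      * intros Hc. apply Hz. left. exact Hc.
      * apply (core _ n Rs N Gs ks hs IHN HN Hd i h0 (ks i) [(R, instantiate B (tfvar z))] G' Hi ltac:(lia)).
        eapply dh_perm; [exact Hp'|]. rewrite HG0. psolve.
Qed.

End Party.

Section Key.
Context {Role fsym psym : Type}.
Notation term := (term fsym).
Notation formula := (formula Role fsym psym).
Notation seqt := (sequent Role fsym psym).
Implicit Types (t u : term) (A B C : formula) (G D : seqt) (s : nat -> term).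

Definition OIH A := forall B, fsize B < fsize A -> forall n (Rs : nat -> rset Role) (Gs : nat -> seqt),
  1 <= n -> partC n Rs -> (forall i, i < n -> der ((Rs i, B) :: Gs i)) -> der (concat (map Gs (seq 0 n))).

Lemma der_const n (Dl : seqt) : 1 <= n -> der (concat (map (fun _ : nat => Dl) (seq 0 n))) -> der Dl.
Proof.
  intros Hn H. apply der_contr_incl with (M := rest (fun _ : nat => Dl) n 0).
  - unfold rest. apply incl_app; apply incl_concat_const.
  - eapply der_perm; [exact H|]. rewrite (concat_split _ n 0) by lia. apply Permutation_app_comm.
Qed.

Lemma der_upd_const n i (Dl L : seqt) : i < n ->
  der (concat (map (upd (fun _ : nat => Dl) i L) (seq 0 n))) -> der (L ++ Dl).
Proof.
  intros Hi H. eapply der_perm in H; [|apply concat_upd; exact Hi].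
  apply der_weak with (D0 := Dl) in H.
  apply der_contr_incl with (M := rest (fun _ : nat => Dl) n i).
  - unfold rest. intros y Hy. apply in_or_app. right. revert y Hy. apply incl_app; apply incl_concat_const.
  - eapply der_perm; [exact H|]. psolve.
Qed.

Lemma partC_preim n Rs (f : Role -> Role) : partC n Rs -> partC n (fun i => preim f (Rs i)).
Proof.
  intros [H1 H2]. split.
  - intros i j r Hi Hj Hij Hr1 Hr2. apply (H1 i j (f r)); auto.
  - intros r. destruct (H2 (f r)) as [i [Hi Hr]]. exists i. auto.
Qed.

Lemma atmost1 n Rs (U : ultrafilter Role) i j : partC n Rs -> i < n -> j < n ->
  ~ uf_mem U (Rs i) -> ~ uf_mem U (Rs j) -> i = j.
Proof.
  intros [Hdisj _] Hi Hj HUi HUj. destruct (Nat.eq_dec i j) as [|Hij]; auto. exfalso.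
  destruct (uf_prop U) as [Hfull [Hup [Hint Hult]]].
  destruct (Hult (Rs i)) as [|Hci]; [contradiction|].
  destruct (Hult (Rs j)) as [|Hcj]; [contradiction|].
  apply HUi. apply (Hup _ _ (Hint _ _ Hci Hcj)).
  intros r [Hr1 Hr2]. exfalso. exact (Hdisj i j r Hi Hj Hij Hr1 Hr2).
Qed.

Section K.
Variables (n : nat) (Rs : nat -> rset Role) (Gs : nat -> seqt).
Hypothesis Hn : 1 <= n.
Hypothesis Hpart : partC n Rs.
Notation Dl := (concat (map Gs (seq 0 n))).

Lemma key_atom (r0 : Role) (a : atom fsym psym) :
  (forall i, i < n -> KeyInfo (fatom a) (Rs i) (Gs i) Dl) -> der Dl.
Proof.
  intros Hk. simpl in Hk.
  destruct (fin_choice (@nil (rset Role), @nil (rset Role), @nil (rset Role * formula)) n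
    (fun i x => is_partition (Rs i :: fst (fst x) ++ snd (fst x)) /\
       (forall R', In R' (fst (fst x)) -> R' = Rs i) /\
       Permutation (Gs i) (map (fun R => (R, @fatom Role fsym psym a)) (snd (fst x)) ++ snd x))) as [F HF].
  { intros i Hi. destruct (Hk i Hi) as [P1 [Q [G' H]]]. exists (P1, Q, G'). exact H. }
  set (f := fun R : rset Role => (R, @fatom Role fsym psym a)).
  set (bigQ := concat (map (fun i => snd (fst (F i))) (seq 0 n))).
  set (bigG := concat (map (fun i => snd (F i)) (seq 0 n))).
  assert (HQ : forall i R r, i < n -> In R (snd (fst (F i))) -> R r -> ~ Rs i r).
  { intros i R r Hi HR Hr Hr'. destruct (HF i Hi) as [Hp _]. apply is_partition_iff in Hp.
    destruct Hp as [[Hp _] _]. exact (Hp R (in_or_app _ _ _ (or_intror HR)) r Hr' Hr). }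
  assert (Hpb : is_partition bigQ).
  { apply is_partition_iff. split.
    - apply PD_concat; [apply seq_NoDup| |].
      + intros i Hi. apply in_seq in Hi. destruct (HF i ltac:(lia)) as [Hp _].
        apply is_partition_iff in Hp. destruct Hp as [[_ Hp] _]. apply PD_app in Hp. tauto.
      + intros i j R R' r Hi Hj Hij HR HR' Hr Hr'. apply in_seq in Hi. apply in_seq in Hj.
        destruct Hpart as [Hdisj _]. apply (Hdisj i j r); try lia; auto;
        [eapply (HQ i R r) | eapply (HQ j R' r)]; eauto; lia.
    - intros r. destruct Hpart as [_ Hcov]. destruct (Hcov r) as [i [Hi Hr]].
      destruct (HF i Hi) as [Hp [HP1 _]]. apply is_partition_iff in Hp. destruct Hp as [_ Hc].
      destruct (Hc r) as [R [HR HRr]]. destruct HR as [E|HR]; [subst; contradiction|].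
      apply in_app_or in HR. destruct HR as [HR|HR]; [apply HP1 in HR; subst; contradiction|].
      exists R. split; auto. apply in_concat. exists (snd (fst (F i))). split; auto.
      apply in_map_iff. exists i. split; auto. apply in_seq. lia. }
  assert (Hne : bigQ <> []).
  { intros E. apply is_partition_iff in Hpb. destruct Hpb as [_ Hc]. destruct (Hc r0) as [R [HR _]].
    rewrite E in HR. contradiction. }
  eapply der_perm; [apply der_id with (P := bigQ) (a := a) (G := bigG); auto|].
  eapply Permutation_trans; [|apply Permutation_sym; apply concat_map_perm with
     (G := fun i => map f (snd (fst (F i))) ++ snd (F i))].
  - eapply Permutation_trans; [|apply Permutation_sym; apply concat_map_app].
    unfold bigQ, bigG. rewrite concat_map, map_map. apply Permutation_refl.
  - intros i Hi. apply in_seq in Hi. apply (HF i ltac:(lia)).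
Qed.

Lemma key_neg (f : Role -> Role) B : OIH (fneg f B) ->
  (forall i, i < n -> KeyInfo (fneg f B) (Rs i) (Gs i) Dl) -> der Dl.
Proof.
  intros IHo Hk. simpl in Hk. apply (der_const n); auto.
  apply (IHo B ltac:(simpl; lia) n (fun i => preim f (Rs i)) (fun _ => Dl) Hn (partC_preim _ _ _ Hpart)).
  auto.
Qed.

Lemma key_and U B C : OIH (fand U B C) ->
  (forall i, i < n -> KeyInfo (fand U B C) (Rs i) (Gs i) Dl) -> der Dl.
Proof.
  intros IHo Hk. simpl in Hk. apply (der_const n); auto.
  destruct (classic (forall i, i < n -> der ((Rs i, B) :: Dl))) as [HB|HB].
  - apply (IHo B ltac:(simpl; lia) n Rs (fun _ => Dl) Hn Hpart). auto.
  - apply (IHo C ltac:(simpl; lia) n Rs (fun _ => Dl) Hn Hpart).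
    apply not_all_ex_not in HB. destruct HB as [i0 HB].
    apply imply_to_and in HB. destruct HB as [Hi0 HB].
    assert (Hneg : ~ uf_mem U (Rs i0) /\ der ((Rs i0, C) :: Dl)).
    { destruct (Hk i0 Hi0) as [[_ H]|[H|[_ [H _]]]]; tauto. }
    intros j Hj. destruct (Nat.eq_dec j i0) as [->|Hne]; [tauto|].
    destruct (Hk j Hj) as [[HU _]|[[HU _]|[_ [_ H]]]]; auto;
      exfalso; apply Hne; apply (atmost1 n Rs U j i0 Hpart Hj Hi0 HU (proj1 Hneg)).
Qed.

Lemma key_imp (f : Role -> Role) U B C : OIH (fimp f U B C) ->
  (forall i, i < n -> KeyInfo (fimp f U B C) (Rs i) (Gs i) Dl) -> der Dl.
Proof.
  intros IHo Hk. simpl in Hk.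
  destruct (classic (exists i0, i0 < n /\ ~ uf_mem U (Rs i0))) as [[i0 [Hi0 HU0]]|Hno].
  - assert (Hpos : forall j, j < n -> j <> i0 -> der ((preim f (Rs j), B) :: Dl) /\ der ((Rs j, C) :: Dl)).
    { intros j Hj Hne. destruct (Hk j Hj) as [[HU _]|[_ H]]; auto.
      exfalso. apply Hne. apply (atmost1 n Rs U j i0 Hpart Hj Hi0 HU HU0). }
    assert (Hneg : der ((preim f (Rs i0), B) :: (Rs i0, C) :: Dl)).
    { destruct (Hk i0 Hi0) as [[_ H]|[H _]]; [auto|contradiction]. }
    assert (HBi0 : der ((preim f (Rs i0), B) :: Dl)).
    { apply der_contr_incl with (M := Dl); [intros y Hy; simpl; auto|].
      eapply der_perm; [apply (der_upd_const n i0 Dl ((preim f (Rs i0), B) :: Dl) Hi0)|psolve].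
      apply (IHo C ltac:(simpl; lia) n Rs _ Hn Hpart).
      intros j Hj. destruct (Nat.eq_dec j i0) as [->|Hne].
      - rewrite upd_eq. eapply der_perm; [exact Hneg|]. apply perm_swap.
      - rewrite upd_neq by auto. apply Hpos; auto. }
    apply (der_const n); auto.
    apply (IHo B ltac:(simpl; lia) n (fun i => preim f (Rs i)) (fun _ => Dl) Hn (partC_preim _ _ _ Hpart)).
    intros j Hj. destruct (Nat.eq_dec j i0) as [->|Hne]; auto. apply Hpos; auto.
  - apply (der_const n); auto.
    apply (IHo C ltac:(simpl; lia) n Rs (fun _ => Dl) Hn Hpart).
    intros j Hj. destruct (Hk j Hj) as [[HU _]|[_ [_ H]]]; auto.
    exfalso. apply Hno. eauto.
Qed.

Lemma key_all U B : OIH (fall U B) ->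
  (forall i, i < n -> KeyInfo (fall U B) (Rs i) (Gs i) Dl) -> der Dl.
Proof.
  intros IHo Hk. simpl in Hk. apply (der_const n); auto.
  destruct (classic (exists i0, i0 < n /\ ~ uf_mem U (Rs i0))) as [[i0 [Hi0 HU0]]|Hno].
  - assert (Hneg : exists t, is_term t /\ der ((Rs i0, instantiate B t) :: Dl)).
    { destruct (Hk i0 Hi0) as [[_ H]|[H _]]; [auto|contradiction]. }
    destruct Hneg as [t [Ht Hder]].
    apply (IHo (instantiate B t) ltac:(rewrite fsize_inst; simpl; lia) n Rs (fun _ => Dl) Hn Hpart).
    intros j Hj. destruct (Nat.eq_dec j i0) as [->|Hne]; auto.
    destruct (Hk j Hj) as [[HU _]|[_ H]]; auto.
    exfalso. apply Hne. apply (atmost1 n Rs U j i0 Hpart Hj Hi0 HU HU0).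
  - apply (IHo (instantiate B (tfvar 0)) ltac:(rewrite fsize_inst; simpl; lia) n Rs (fun _ => Dl) Hn Hpart).
    intros j Hj. destruct (Hk j Hj) as [[HU _]|[_ H]].
    + exfalso. apply Hno. eauto.
    + apply H. exact I.
Qed.

End K.

Lemma inner (r0 : Role) A (IHo : OIH A) : forall N n Rs (Gs : nat -> seqt) ks hs,
  hsum hs n < N -> 1 <= n -> partC n Rs ->
  (forall i, i < n -> dh (hs i) (repeat (Rs i, A) (ks i) ++ Gs i)) -> der (concat (map Gs (seq 0 n))).
Proof.
  induction N as [|N IHN]; intros n Rs Gs ks hs HN Hn Hpart Hd; [lia|].
  assert (IHN' : MCprop A n Rs N).
  { intros Gs' ks' hs' H1 H2. exact (IHN n Rs Gs' ks' hs' H1 Hn Hpart H2). }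
  destruct (classic (exists i, i < n /\ ks i = 0)) as [[i [Hi Hk0]]|Hno].
  - pose proof (Hd i Hi) as H. rewrite Hk0 in H. simpl in H.
    eapply der_perm; [apply der_weak with (D0 := rest Gs n i); exists (hs i); exact H|].
    rewrite (concat_split Gs n i Hi). apply Permutation_refl.
  - assert (Hall : forall i, i < n -> KeyInfo A (Rs i) (Gs i) (concat (map Gs (seq 0 n))) \/
                                       der (concat (map Gs (seq 0 n)))).
    { intros i Hi. apply (party A n Rs N Gs ks hs IHN' HN Hd i Hi).
      destruct (ks i) eqn:E; [|lia]. exfalso. apply Hno. eauto. }
    destruct (classic (der (concat (map Gs (seq 0 n))))) as [HD|HnD]; auto.
    assert (Hkey : forall i, i < n -> KeyInfo A (Rs i) (Gs i) (concat (map Gs (seq 0 n)))).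
    { intros i Hi. destruct (Hall i Hi); [auto|contradiction]. }
    destruct A.
    + exact (key_atom n Rs Gs Hn Hpart r0 _ Hkey).
    + exact (key_neg n Rs Gs Hn Hpart _ _ IHo Hkey).
    + exact (key_and n Rs Gs Hn Hpart _ _ _ IHo Hkey).
    + exact (key_imp n Rs Gs Hn Hpart _ _ _ _ IHo Hkey).
    + exact (key_all n Rs Gs Hn Hpart _ _ IHo Hkey).
Qed.

Lemma full (r0 : Role) : forall m A, fsize A < m -> forall n (Rs : nat -> rset Role) (Gs : nat -> seqt),
  1 <= n -> partC n Rs -> (forall i, i < n -> der ((Rs i, A) :: Gs i)) -> der (concat (map Gs (seq 0 n))).
Proof.
  induction m as [|m IHm]; intros A HA n Rs Gs Hn Hpart Hder; [lia|].
  destruct (fin_choice 0 n (fun i h => dh h ((Rs i, A) :: Gs i)) Hder) as [hs Hhs].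
  apply (inner r0 A) with (N := S (hsum hs n)) (Rs := Rs) (ks := fun _ => 1) (hs := hs); auto.
  intros B HB. apply IHm. lia.
Qed.

End Key.

Theorem mainTheorem7 (Role fsym psym : Type) (Hne : inhabited Role)
  (n : nat) (Hn : 1 <= n)
  (Rs : nat -> rset Role)
  (Gs : nat -> sequent Role fsym psym)
  (A : formula Role fsym psym)
  (Hdisj : forall i j r, i < n -> j < n -> i <> j ->
             rcompl (Rs i) r -> rcompl (Rs j) r -> False)
  (Hcover : forall r, exists i, i < n /\ rcompl (Rs i) r)
  (HA : is_formula A)
  (HG : forall i, i < n -> forall p, In p (Gs i) -> is_formula (snd p))
  (Hder : forall i, i < n -> derivable ((Rs i, A) :: Gs i)) :
  derivable (concat (map Gs (seq 0 n))).
Proof.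
  destruct Hne as [r0].
  assert (H : der (concat (map Gs (seq 0 n)))).
  { apply (full r0 (S (fsize A)) A ltac:(lia) n Rs Gs Hn).
    - split; [exact Hdisj | exact Hcover].
    - intros i Hi. apply der_dh. auto. }
  destruct H as [h H]. exact (dh_der h _ H).
Qed.
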